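(* Let $X$ be a Banach space containing no subspace isomorphic to $\ell_1$. Then every bounded sequence $(x_n^* )$ in $X^*$ satisfies $\operatorname{ca}(x_n^* )\le 3\operatorname{ca}_{\rho^*}(x_n^* )$.
   Context: For a bounded sequence $(x_k^* )$ in $X^*$: $\operatorname{ca}(x_k^* )=\inf_{n}\operatorname{diam}\{x_k^*:k\ge n\}$ (norm diameter), and $\operatorname{ca}_{\rho^*}(x_k^* )=\sup\{\inf_n\sup_{k,l\ge n}\sup_{x\in L}|(x_k^*-x_l^* )(x)| : L\subset B_{X}\text{ weakly compact}\}$. *)

(* Defs.v *)
From Stdlib Require Import Reals Lra List Classical ClassicalEpsilon.
Open Scope R_scope.

Record Banach := {
  V :> Type;
  vzero : V;
  vadd : V -> V -> V;
  vopp : V -> V;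
  vscal : R -> V -> V;
  vnorm : V -> R;
  vadd_assoc : forall x y z, vadd x (vadd y z) = vadd (vadd x y) z;
  vadd_comm : forall x y, vadd x y = vadd y x;
  vadd_0 : forall x, vadd x vzero = x;
  vadd_opp : forall x, vadd x (vopp x) = vzero;
  vscal_1 : forall x, vscal 1 x = x;
  vscal_assoc : forall a b x, vscal a (vscal b x) = vscal (a * b) x;
  vscal_distr_l : forall a x y, vscal a (vadd x y) = vadd (vscal a x) (vscal a y);
  vscal_distr_r : forall a b x, vscal (a + b) x = vadd (vscal a x) (vscal b x);
  vnorm_eq0 : forall x, vnorm x = 0 <-> x = vzero;
  vnorm_triangle : forall x y, vnorm (vadd x y) <= vnorm x + vnorm y;
  vnorm_scal : forall a x, vnorm (vscal a x) = Rabs a * vnorm x;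
  vcomplete : forall u : nat -> V,
    (forall eps, 0 < eps -> exists N, forall m n, (N <= m)%nat -> (N <= n)%nat ->
        vnorm (vadd (u m) (vopp (u n))) < eps) ->
    exists x, forall eps, 0 < eps -> exists N, forall n, (N <= n)%nat ->
        vnorm (vadd (u n) (vopp x)) < eps
}.

Arguments vzero {_}.
Arguments vadd {_} _ _.
Arguments vopp {_} _.
Arguments vscal {_} _ _.
Arguments vnorm {_} _.

(* Total supremum / infimum of a set of reals (0 by convention when the set
   is empty or unbounded; all uses below are on nonempty bounded sets). *)
Definition Rsup (E : R -> Prop) : R :=
  match excluded_middle_informative (bound E /\ exists x, E x) with
  | left H => proj1_sig (completeness E (proj1 H) (proj2 H))
  | right _ => 0
  end.

Definition Rinf (E : R -> Prop) : R := - Rsup (fun x => E (- x)).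

Definition is_dual (X : Banach) (f : X -> R) : Prop :=
  (forall x y, f (vadd x y) = f x + f y) /\
  (forall a x, f (vscal a x) = a * f x) /\
  (exists M, forall x, Rabs (f x) <= M * vnorm x).

Definition dnorm (X : Banach) (f : X -> R) : R :=
  Rsup (fun r => exists x : X, vnorm x <= 1 /\ r = Rabs (f x)).

Definition weakly_open (X : Banach) (U : X -> Prop) : Prop :=
  forall x, U x -> exists (fs : list (X -> R)) (eps : R),
    Forall (is_dual X) fs /\ 0 < eps /\
    forall y, (forall f, In f fs -> Rabs (f (vadd y (vopp x))) < eps) -> U y.

Definition weakly_compact (X : Banach) (L : X -> Prop) : Prop :=
  forall (I : Type) (U : I -> X -> Prop),
    (forall i, weakly_open X (U i)) ->
    (forall x, L x -> exists i, U i x) ->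
    exists l : list I, forall x, L x -> exists i, In i l /\ U i x.

Definition is_l1 (a : nat -> R) : Prop :=
  exists l, infinite_sum (fun n => Rabs (a n)) l.

(* X contains a subspace isomorphic to ell_1: there is a linear isomorphic
   embedding T : ell_1 -> X (its range is then a (closed) subspace of X
   isomorphic to ell_1). *)
Definition contains_l1 (X : Banach) : Prop :=
  exists (T : (nat -> R) -> X) (c C : R), 0 < c /\ 0 < C /\
    (forall a b, is_l1 a -> is_l1 b ->
       T (fun n => a n + b n) = vadd (T a) (T b)) /\
    (forall r a, is_l1 a -> T (fun n => r * a n) = vscal r (T a)) /\
    (forall a l, infinite_sum (fun n => Rabs (a n)) l ->
       c * l <= vnorm (T a) /\ vnorm (T a) <= C * l).

Definition ca (X : Banach) (xs : nat -> X -> R) : R :=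
  Rinf (fun s => exists n : nat, s =
    Rsup (fun t => exists k l : nat, (n <= k)%nat /\ (n <= l)%nat /\
            t = dnorm X (fun x => xs k x - xs l x))).

Definition ca_rho (X : Banach) (xs : nat -> X -> R) : R :=
  Rsup (fun r => exists L : X -> Prop,
    (forall x, L x -> vnorm x <= 1) /\ weakly_compact X L /\
    r = Rinf (fun s => exists n : nat, s =
          Rsup (fun t => exists k l : nat, (n <= k)%nat /\ (n <= l)%nat /\
                  t = Rsup (fun u => exists x, L x /\ u = Rabs (xs k x - xs l x))))).

(* Main.v *)
Require Import Defs.
From Stdlib Require Import Reals Lra Lia List Classical ClassicalEpsilon.
Open Scope R_scope.


Lemma vadd_0l (X : Banach) (x : X) : vadd vzero x = x.
Proof. rewrite vadd_comm; apply vadd_0. Qed.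

Lemma vadd_cancel (X : Banach) (x y z : X) : vadd x y = vadd x z -> y = z.
Proof.
  intro H.
  assert (vadd (vopp x) (vadd x y) = vadd (vopp x) (vadd x z)) by now rewrite H.
  rewrite !vadd_assoc in H0. rewrite (vadd_comm _ (vopp x) x), vadd_opp, !vadd_0l in H0. exact H0.
Qed.

Lemma vscal_0 (X : Banach) (x : X) : vscal 0 x = vzero.
Proof.
  apply (vadd_cancel X (vscal 0 x)). rewrite vadd_0. rewrite <- (vscal_distr_r X 0 0 x). f_equal; ring.
Qed.

Lemma vopp_scal (X : Banach) (x : X) : vopp x = vscal (-1) x.
Proof.
  apply (vadd_cancel X x). rewrite vadd_opp.
  assert (vadd x (vscal (-1) x) = vscal (1 + -1) x) as E.
  { rewrite vscal_distr_r, vscal_1. reflexivity. }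
  rewrite E. replace (1 + -1) with 0 by ring. now rewrite vscal_0.
Qed.

Lemma vopp_zero (X : Banach) : vopp (@vzero X) = vzero.
Proof. rewrite <- (vadd_0l X (vopp vzero)). apply vadd_opp. Qed.

Lemma vnorm_zero (X : Banach) : vnorm (@vzero X) = 0.
Proof. apply vnorm_eq0. reflexivity. Qed.

Lemma vnorm_opp (X : Banach) (x : X) : vnorm (vopp x) = vnorm x.
Proof. rewrite vopp_scal, vnorm_scal. replace (Rabs (-1)) with 1. ring. rewrite Rabs_left by lra; ring. Qed.

Lemma vnorm_nonneg (X : Banach) (x : X) : 0 <= vnorm x.
Proof.
  pose proof (vnorm_triangle X x (vopp x)). rewrite vadd_opp, vnorm_zero, vnorm_opp in H. lra.
Qed.

Lemma vopp_add (X : Banach) (x y : X) : vopp (vadd x y) = vadd (vopp x) (vopp y).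
Proof. rewrite !vopp_scal. apply vscal_distr_l. Qed.

Lemma vopp_opp (X : Banach) (x : X) : vopp (vopp x) = x.
Proof. rewrite !vopp_scal, vscal_assoc. replace (-1 * -1) with 1 by ring. apply vscal_1. Qed.

Lemma vscal_opp (X : Banach) (a : R) (x : X) : vscal a (vopp x) = vopp (vscal a x).
Proof. rewrite !vopp_scal, !vscal_assoc. f_equal; ring. Qed.

Lemma vadd_swap (X : Banach) (a b c d : X) : vadd (vadd a b) (vadd c d) = vadd (vadd a c) (vadd b d).
Proof.
  rewrite !vadd_assoc. f_equal. rewrite <- !vadd_assoc. f_equal. apply vadd_comm.
Qed.

Definition dist (X : Banach) (x y : X) := vnorm (vadd x (vopp y)).

Lemma dist_sym (X : Banach) (x y : X) : dist X x y = dist X y x.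
Proof.
  unfold dist. rewrite <- vnorm_opp, vopp_add, vopp_opp, vadd_comm. reflexivity.
Qed.

Lemma dist_tri (X : Banach) (x y z : X) : dist X x z <= dist X x y + dist X y z.
Proof.
  unfold dist. eapply Rle_trans; [|apply vnorm_triangle]. right. f_equal.
  rewrite <- vadd_assoc, (vadd_assoc _ (vopp y) y), (vadd_comm _ (vopp y) y), vadd_opp, vadd_0l. reflexivity.
Qed.

Lemma vnorm_dist (X : Banach) (x y : X) : vnorm x <= vnorm y + dist X x y.
Proof.
  unfold dist. pose proof (vnorm_triangle X y (vadd x (vopp y))).
  assert (E : vadd y (vadd x (vopp y)) = x).
  { rewrite (vadd_comm _ x (vopp y)), vadd_assoc, vadd_opp, vadd_0l. reflexivity. }
  rewrite E in H. exact H.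
Qed.

Lemma dual_zero (X : Banach) f : is_dual X f -> f vzero = 0.
Proof. intros [H _]. pose proof (H vzero vzero). rewrite vadd_0 in H0. lra. Qed.

Lemma dual_opp (X : Banach) f x : is_dual X f -> f (vopp x) = - f x.
Proof. intros Hf. pose proof Hf as [H _]. pose proof (H x (vopp x)). rewrite vadd_opp, dual_zero in H0 by auto. lra. Qed.

Lemma dual_sub (X : Banach) f x y : is_dual X f -> f (vadd x (vopp y)) = f x - f y.
Proof. intros Hf. pose proof Hf as [H _]. rewrite H, dual_opp by auto. ring. Qed.

Lemma dual_scal (X : Banach) f a x : is_dual X f -> f (vscal a x) = a * f x.
Proof. intros [_ [H _]]. apply H. Qed.

Lemma Rsup_ub (E : R -> Prop) x : bound E -> E x -> x <= Rsup E.
Proof.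
  intros Hb Hx. unfold Rsup. destruct excluded_middle_informative as [H|H].
  - destruct completeness as [s [Hs1 Hs2]]. simpl. apply Hs1; auto.
  - exfalso; apply H; split; eauto.
Qed.

Lemma Rsup_le (E : R -> Prop) b : (forall x, E x -> x <= b) -> 0 <= b -> Rsup E <= b.
Proof.
  intros Hb H0. unfold Rsup. destruct excluded_middle_informative as [H|H]; auto.
  destruct completeness as [s [Hs1 Hs2]]. simpl. apply Hs2. intros x Hx; auto.
Qed.

Lemma Rsup_lub (E : R -> Prop) b : (exists x, E x) -> (forall x, E x -> x <= b) -> Rsup E <= b.
Proof.
  intros Hne Hb. unfold Rsup. destruct excluded_middle_informative as [H|H].
  - destruct completeness as [s [Hs1 Hs2]]. simpl. apply Hs2. intros x Hx; auto.
  - exfalso; apply H; split; auto. exists b. intros x Hx; auto.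
Qed.

Lemma Rsup_nonneg (E : R -> Prop) x : E x -> 0 <= x -> 0 <= Rsup E.
Proof.
  intros Hx H0. unfold Rsup. destruct excluded_middle_informative as [H|H]; [|lra].
  destruct completeness as [s [Hs1 Hs2]]. simpl. apply Rle_trans with x; auto.
Qed.

Lemma Rsup_gt (E : R -> Prop) a : (exists x, E x) -> a < Rsup E -> exists x, E x /\ a < x.
Proof.
  intros Hne Ha. apply NNPP. intro Hn.
  assert (forall x, E x -> x <= a).
  { intros x Hx. apply Rnot_lt_le. intro. apply Hn. eauto. }
  pose proof (Rsup_lub E a Hne H). lra.
Qed.

Lemma Rinf_lb (E : R -> Prop) x b : (forall y, E y -> b <= y) -> E x -> Rinf E <= x.
Proof.
  intros Hb Hx. unfold Rinf.
  assert (- x <= Rsup (fun y => E (- y))).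
  { apply Rsup_ub. exists (- b). intros y Hy. apply Hb in Hy. lra. rewrite Ropp_involutive; auto. }
  lra.
Qed.

Lemma Rinf_le_max (E : R -> Prop) x : E x -> Rinf E <= Rmax x 0.
Proof.
  intros Hx. unfold Rinf, Rsup. destruct excluded_middle_informative as [H|H].
  - destruct completeness as [s [Hs1 Hs2]]. simpl.
    assert (-x <= s) by (apply Hs1; rewrite Ropp_involutive; auto).
    pose proof (Rmax_l x 0). lra.
  - pose proof (Rmax_r x 0). lra.
Qed.

Lemma Rinf_lt (E : R -> Prop) a : (exists x, E x) -> Rinf E < a -> exists x, E x /\ x < a.
Proof.
  intros [x0 Hx0] Ha. apply NNPP. intro Hn.
  assert (Hb : forall x, E x -> a <= x).
  { intros x Hx. apply Rnot_lt_le. intro. apply Hn. eauto. }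
  unfold Rinf in Ha.
  assert (Rsup (fun y => E (- y)) <= - a).
  { apply Rsup_lub. exists (- x0). rewrite Ropp_involutive; auto.
    intros y Hy. apply Hb in Hy. lra. }
  lra.
Qed.


Lemma wc_single (X : Banach) (z : X) : weakly_compact X (fun x => x = z).
Proof.
  intros I U HU Hc. destruct (Hc z eq_refl) as [i Hi].
  exists (i :: nil). intros x ->. exists i. split; simpl; auto.
Qed.

Lemma fin_cover (X : Banach) (I : Type) (U : I -> X -> Prop) (w : nat -> X) :
  (forall i, exists j, U j (w i)) ->
  forall N, exists l : list I, forall i, (i < N)%nat -> exists j, In j l /\ U j (w i).
Proof.
  intros H N. induction N as [|N IH].
  - exists nil. intros i Hi. lia.
  - destruct IH as [l Hl]. destruct (H N) as [j Hj]. exists (j :: l).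
    intros i Hi. destruct (Nat.eq_dec i N) as [->|Hne].
    + exists j; simpl; auto.
    + destruct (Hl i) as [j' [Hj'1 Hj'2]]; [lia|]. exists j'; simpl; auto.
Qed.

Lemma fin_eventually (X : Banach) (w : nat -> X) (eps : R) (fs : list (X -> R)) :
  Forall (is_dual X) fs ->
  (forall f, is_dual X f -> exists N, forall i, (N <= i)%nat -> Rabs (f (w i)) < eps) ->
  exists N, forall i, (N <= i)%nat -> forall f, In f fs -> Rabs (f (w i)) < eps.
Proof.
  intros Hfs Hw. induction fs as [|f fs IH].
  - exists 0%nat. intros i _ f [].
  - inversion Hfs; subst. destruct (IH H2) as [N1 HN1]. destruct (Hw f H1) as [N2 HN2].
    exists (Nat.max N1 N2). intros i Hi g [<-|Hg].
    + apply HN2. lia.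
    + apply HN1; auto. lia.
Qed.

Lemma wc_null (X : Banach) (w : nat -> X) :
  (forall f, is_dual X f -> forall eps, 0 < eps -> exists N, forall i, (N <= i)%nat -> Rabs (f (w i)) < eps) ->
  weakly_compact X (fun x => x = vzero \/ exists i, x = w i).
Proof.
  intros Hw I U HU Hc.
  destruct (Hc vzero (or_introl eq_refl)) as [i0 Hi0].
  destruct (HU i0 vzero Hi0) as [fs [eps [Hfs [Heps HUi0]]]].
  destruct (fin_eventually X w eps fs Hfs (fun f Hf => Hw f Hf eps Heps)) as [N HN].
  destruct (fin_cover X I U w (fun i => Hc (w i) (or_intror (ex_intro _ i eq_refl))) N) as [l Hl].
  exists (i0 :: l). intros x [->|[i ->]].
  - exists i0. simpl; auto.
  - destruct (Compare_dec.le_lt_dec N i) as [Hi|Hi].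
    + exists i0. split; [simpl; auto|]. apply HUi0. intros f Hf.
      rewrite vopp_zero, vadd_0. apply HN; auto.
    + destruct (Hl i Hi) as [j [Hj1 Hj2]]. exists j. simpl; auto.
Qed.


Definition wcauchy (X : Banach) (y : nat -> X) := forall f, is_dual X f -> forall eps, 0 < eps ->
  exists N, forall p q, (N <= p)%nat -> (N <= q)%nat -> Rabs (f (y p) - f (y q)) < eps.

Definition RosenthalProp (X : Banach) := forall y : nat -> X, (forall j, vnorm (y j) <= 1) ->
  exists g : nat -> nat, (forall j, (g j < g (S j))%nat) /\ wcauchy X (fun j => y (g j)).

Lemma choice_fun {A B : Type} (P : A -> B -> Prop) : (forall a, exists b, P a b) -> exists f, forall a, P a (f a).
Proof.
  intros H. exists (fun a => proj1_sig (constructive_indefinite_description _ (H a))).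
  intro a. exact (proj2_sig (constructive_indefinite_description _ (H a))).
Qed.

Lemma strict_ge (g : nat -> nat) : (forall j, (g j < g (S j))%nat) -> forall j, (j <= g j)%nat.
Proof. intros H j. induction j; [lia|]. specialize (H j). lia. Qed.

Lemma strict_mono (g : nat -> nat) : (forall j, (g j < g (S j))%nat) -> forall i j, (i < j)%nat -> (g i < g j)%nat.
Proof.
  intros H i j Hij. induction j; [lia|]. destruct (Nat.eq_dec i j) as [->|Hne]; [apply H|].
  specialize (IHj ltac:(lia)). specialize (H j). lia.
Qed.

Lemma dual_bound (X : Banach) f x : is_dual X f -> vnorm x <= 1 -> Rabs (f x) <= dnorm X f.
Proof.
  intros Hf Hx. pose proof Hf as [_ [_ [Mf HMf]]]. apply Rsup_ub; [|eauto].
  exists (Rabs Mf). intros r [x' [Hx' ->]]. specialize (HMf x').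
  pose proof (vnorm_nonneg X x'). pose proof (Rle_abs Mf). pose proof (Rabs_pos Mf).
  apply Rle_trans with (Mf * vnorm x'); auto.
  destruct (Rle_dec 0 Mf); nra.
Qed.

Lemma dnorm_nonneg (X : Banach) f : 0 <= dnorm X f.
Proof.
  apply (Rsup_nonneg _ (Rabs (f vzero))); [|apply Rabs_pos].
  exists vzero. split; auto. rewrite vnorm_zero. lra.
Qed.


Lemma diff_bound (X : Banach) (xs : nat -> X -> R) M0 :
  (forall k, is_dual X (xs k)) -> (forall k, dnorm X (xs k) <= M0) ->
  forall k l x, vnorm x <= 1 -> Rabs (xs k x - xs l x) <= 2 * M0.
Proof.
  intros Hd Hb k l x Hx. pose proof (dual_bound X _ x (Hd k) Hx). pose proof (dual_bound X _ x (Hd l) Hx).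
  pose proof (Hb k); pose proof (Hb l).
  unfold Rminus. eapply Rle_trans; [apply Rabs_triang|]. rewrite Rabs_Ropp. lra.
Qed.

Lemma F1 (X : Banach) (xs : nat -> X -> R) M0 :
  (forall k, is_dual X (xs k)) -> (forall k, dnorm X (xs k) <= M0) ->
  forall n eps, 0 < eps -> exists k l z, (n <= k)%nat /\ (n <= l)%nat /\ vnorm z <= 1 /\
     ca X xs - eps < Rabs (xs k z - xs l z).
Proof.
  intros Hd Hb n eps Heps.
  pose proof (dnorm_nonneg X (xs 0%nat)) as HM0. specialize (Hb 0%nat) as Hb0.
  set (T := fun m => fun t => exists k l : nat, (m <= k)%nat /\ (m <= l)%nat /\
            t = dnorm X (fun x => xs k x - xs l x)).
  assert (Hca : ca X xs <= Rsup (T n)).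
  { unfold ca. apply (Rinf_lb _ _ 0).
    - intros y [m ->]. apply (Rsup_nonneg _ (dnorm X (fun x => xs m x - xs m x))).
      + exists m, m. auto.
      + apply dnorm_nonneg.
    - exists n. reflexivity. }
  destruct (Rsup_gt (T n) (ca X xs - eps)) as [t [[k [l [Hk [Hl ->]]]] Ht]].
  { exists (dnorm X (fun x => xs n x - xs n x)), n, n. auto. }
  { lra. }
  destruct (Rsup_gt _ _ (ex_intro _ (Rabs (xs k vzero - xs l vzero)) (ex_intro _ vzero (conj (Rle_trans _ _ _ (Req_le _ _ (vnorm_zero X)) Rle_0_1) eq_refl))) Ht)
    as [u [[z [Hz ->]] Hu]].
  exists k, l, z. auto.
Qed.

Lemma F2 (X : Banach) (xs : nat -> X -> R) M0 :
  (forall k, is_dual X (xs k)) -> (forall k, dnorm X (xs k) <= M0) ->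
  forall L : X -> Prop, (forall x, L x -> vnorm x <= 1) -> weakly_compact X L ->
  forall eps, 0 < eps -> exists N, forall k l x, (N <= k)%nat -> (N <= l)%nat -> L x ->
     Rabs (xs k x - xs l x) < ca_rho X xs + eps.
Proof.
  intros Hd Hb L HL HLc eps Heps.
  pose proof (dnorm_nonneg X (xs 0%nat)) as HM0. specialize (Hb 0%nat) as Hb0.
  assert (HD := diff_bound X xs M0 Hd Hb).
  set (tt := fun (L : X -> Prop) k l => Rsup (fun u => exists x, L x /\ u = Rabs (xs k x - xs l x))).
  set (ss := fun (L : X -> Prop) n => Rsup (fun t => exists k l : nat, (n <= k)%nat /\ (n <= l)%nat /\ t = tt L k l)).
  assert (Htt : forall L, (forall x, L x -> vnorm x <= 1) -> forall k l, tt L k l <= 2 * M0).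
  { intros L' HL' k l. apply Rsup_le; [|lra]. intros u [x [Hx ->]]. apply HD; auto. }
  assert (Hss : forall L, (forall x, L x -> vnorm x <= 1) -> forall n, ss L n <= 2 * M0).
  { intros L' HL' n. apply Rsup_le; [|lra]. intros u [k [l [_ [_ ->]]]]. apply Htt; auto. }
  assert (Hr : Rinf (fun s => exists n, s = ss L n) <= ca_rho X xs).
  { unfold ca_rho. apply Rsup_ub.
    - exists (2 * M0). intros r [L' [HL' [_ ->]]].
      eapply Rle_trans; [apply (Rinf_le_max _ (ss L' 0%nat)); exists 0%nat; reflexivity|].
      apply Rmax_lub; [apply Hss; auto|lra].
    - exists L. split; auto. }
  destruct (Rinf_lt (fun s => exists n, s = ss L n) (ca_rho X xs + eps)) as [s [[n ->] Hs]].
  { exists (ss L 0%nat), 0%nat. reflexivity. }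
  { lra. }
  exists n. intros k l x Hk Hl Hx.
  apply Rle_lt_trans with (ss L n); auto.
  apply Rle_trans with (tt L k l).
  - apply Rsup_ub; [|exists x; auto]. exists (2 * M0). intros u [x' [Hx' ->]]. apply HD; auto.
  - apply Rsup_ub; [|exists k, l; auto]. exists (2 * M0). intros u [k' [l' [_ [_ ->]]]]. apply Htt; auto.
Qed.

Fixpoint mseq (Ns : nat -> nat) (i : nat) : nat :=
  match i with
  | O => O
  | S i' => Nat.max (S (mseq Ns i')) (Ns (mseq Ns i'))
  end.

Lemma main_reduction (X : Banach) (HR : RosenthalProp X)
  (xs : nat -> X -> R) (Hdual : forall k, is_dual X (xs k))
  (Hbdd : exists M, forall k, dnorm X (xs k) <= M) :
  ca X xs <= 3 * ca_rho X xs.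
Proof.
  destruct Hbdd as [M0 Hb].
  apply Rnot_lt_le. intro Hlt.
  set (eps := (ca X xs - 3 * ca_rho X xs) / 8).
  assert (Heps : 0 < eps) by (unfold eps; lra).
  destruct (choice_fun (fun n (p : nat * nat * X) => let '(k, l, z) := p in
      (n <= k)%nat /\ (n <= l)%nat /\ vnorm z <= 1 /\ ca X xs - eps < Rabs (xs k z - xs l z)))
    as [F HF].
  { intro n. destruct (F1 X xs M0 Hdual Hb n eps Heps) as [k [l [z H]]]. exists (k, l, z). exact H. }
  destruct (choice_fun (fun (z : X) (N : nat) => vnorm z <= 1 -> forall k l, (N <= k)%nat -> (N <= l)%nat ->
      Rabs (xs k z - xs l z) < ca_rho X xs + eps)) as [Ns HNs].
  { intro z. destruct (classic (vnorm z <= 1)) as [Hz|Hz].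
    - destruct (F2 X xs M0 Hdual Hb (fun x => x = z)) with (eps := eps) as [N HN]; auto.
      + intros x ->; auto.
      + apply wc_single.
      + exists N. intros _ k l Hk Hl. apply HN; auto.
    - exists 0%nat. intro; contradiction. }
  set (Z := fun j => snd (F j)).
  assert (HZ : forall j, vnorm (Z j) <= 1).
  { intro j. unfold Z. specialize (HF j). destruct (F j) as [[k l] z]. simpl. tauto. }
  destruct (HR Z HZ) as [g [Hg Hwc]].
  set (yy := fun j => Z (g j)).
  set (m := mseq (fun j => Ns (yy j))).
  assert (HmE : forall i, m (S i) = Nat.max (S (m i)) (Ns (yy (m i)))) by reflexivity.
  assert (Hm : forall i, (m i < m (S i))%nat) by (intro i; rewrite HmE; lia).
  assert (HmS : forall i, (Ns (yy (m i)) <= m (S i))%nat) by (intro i; rewrite HmE; lia).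
  set (w := fun i => vscal (1/2) (vadd (yy (m (S i))) (vopp (yy (m i))))).
  assert (Hfw : forall f i, is_dual X f -> f (w i) = / 2 * (f (yy (m (S i))) - f (yy (m i)))).
  { intros f i Hf. unfold w. rewrite dual_scal, dual_sub by auto. field. }
  set (L := fun x => x = vzero \/ exists i, x = w i).
  assert (HL : forall x, L x -> vnorm x <= 1).
  { intros x [->|[i ->]]. rewrite vnorm_zero; lra.
    unfold w. rewrite vnorm_scal. pose proof (vnorm_triangle X (yy (m (S i))) (vopp (yy (m i)))).
    rewrite vnorm_opp in H. pose proof (HZ (g (m (S i)))). pose proof (HZ (g (m i))).
    rewrite Rabs_right by lra. unfold yy in *. pose proof (vnorm_nonneg X (vadd (Z (g (m (S i)))) (vopp (Z (g (m i)))))). nra. }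
  assert (HLc : weakly_compact X L).
  { apply wc_null. intros f Hf e He. destruct (Hwc f Hf (2 * e)) as [N HN]; [lra|].
    exists N. intros i Hi. rewrite Hfw by auto.
    pose proof (strict_ge m Hm i). pose proof (strict_ge m Hm (S i)).
    specialize (HN (m (S i)) (m i) ltac:(lia) ltac:(lia)). unfold yy.
    rewrite Rabs_mult, Rabs_right by lra. lra. }
  destruct (F2 X xs M0 Hdual Hb L HL HLc eps Heps) as [NL HNL].
  set (i := NL). set (j := m (S i)).
  pose proof (HF (g j)) as HFj.
  destruct (F (g j)) as [[k l] z] eqn:EF.
  destruct HFj as [Hk [Hl [Hz Hgt]]].
  assert (EZ : Z (g j) = z) by (unfold Z; rewrite EF; reflexivity).
  assert (Hjg := strict_ge g Hg j). assert (Hji := strict_ge m Hm (S i)).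
  fold j in Hji.
  assert (H1 : Rabs (xs k (w i) - xs l (w i)) < ca_rho X xs + eps).
  { apply HNL; try lia. right; exists i; auto. }
  assert (H2 : Rabs (xs k (Z (g (m i))) - xs l (Z (g (m i)))) < ca_rho X xs + eps).
  { apply HNs; auto. specialize (HmS i). fold j in HmS. unfold yy in HmS. lia.
    specialize (HmS i). fold j in HmS. unfold yy in HmS. lia. }
  rewrite !Hfw in H1 by auto. unfold yy in H1. fold j in H1.
  rewrite EZ in H1.
  replace (/ 2 * (xs k z - xs k (Z (g (m i)))) - / 2 * (xs l z - xs l (Z (g (m i)))))
    with (/2 * ((xs k z - xs l z) - (xs k (Z (g (m i))) - xs l (Z (g (m i)))))) in H1 by ring.
  rewrite Rabs_mult, Rabs_right in H1 by lra.
  pose proof (Rabs_triang (xs k z - xs l z - (xs k (Z (g (m i))) - xs l (Z (g (m i))))) (xs k (Z (g (m i))) - xs l (Z (g (m i))))).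
  replace (xs k z - xs l z - (xs k (Z (g (m i))) - xs l (Z (g (m i)))) + (xs k (Z (g (m i))) - xs l (Z (g (m i)))))
    with (xs k z - xs l z) in H by ring.
  unfold eps in *. lra.
Qed.


Definition infinite (M : nat -> Prop) := forall n, exists m, (n <= m)%nat /\ M m.

Definition osc (X : Banach) (y : nat -> X) (r s : R) (f : X -> R) (N : nat -> Prop) :=
  (forall n, exists m, (n <= m)%nat /\ N m /\ f (y m) <= r) /\
  (forall n, exists m, (n <= m)%nat /\ N m /\ s <= f (y m)).

Definition HNC (X : Banach) (y : nat -> X) (r s : R) (C : (X -> R) -> Prop) (M : nat -> Prop) :=
  forall N, infinite N -> (forall n, N n -> M n) -> exists f, C f /\ osc X y r s f N.

Definition Cside (X : Banach) (y : nat -> X) (P : R -> Prop) (m : nat) (C : (X -> R) -> Prop) :=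
  fun f => C f /\ P (f (y m)).

Lemma iterate {A : Type} (valid : A -> Prop) (rel : A -> A -> Prop) (a0 : A) :
  valid a0 -> (forall a, valid a -> exists b, rel a b) -> (forall a b, valid a -> rel a b -> valid b) ->
  exists s : nat -> A, s 0%nat = a0 /\ forall i, valid (s i) /\ rel (s i) (s (S i)).
Proof.
  intros H0 Hex Hv.
  destruct (choice_fun (fun a b => valid a -> rel a b)) as [f Hf].
  { intro a. destruct (classic (valid a)) as [Ha|Ha].
    - destruct (Hex a Ha) as [b Hb]. exists b; auto.
    - exists a; intro; contradiction. }
  exists (fun i => Nat.iter i f a0). split; [reflexivity|].
  assert (Hval : forall i, valid (Nat.iter i f a0)).
  { induction i; simpl; auto. apply (Hv _ _ IHi (Hf _ IHi)). }
  intro i. split; [apply Hval|]. exact (Hf _ (Hval i)).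
Qed.

Lemma pigeon_gen {T : Type} (l : list T) (t : nat -> T) :
  (exists N, forall i, (N <= i)%nat -> In (t i) l) ->
  exists x, In x l /\ forall n, exists i, (n <= i)%nat /\ t i = x.
Proof.
  induction l as [|a l IH]; intros [N HN].
  - destruct (HN N (le_n N)).
  - destruct (classic (forall n, exists i, (n <= i)%nat /\ t i = a)) as [Ha|Ha].
    + exists a. split; simpl; auto.
    + apply not_all_ex_not in Ha. destruct Ha as [n0 Hn0].
      destruct IH as [x [Hx1 Hx2]].
      { exists (Nat.max N n0). intros i Hi. destruct (HN i ltac:(lia)) as [E|E]; auto.
        exfalso. apply Hn0. exists i. split; [lia|auto]. }
      exists x. split; simpl; auto.
Qed.

Lemma infinite_gt (N : nat -> Prop) (m : nat) : infinite N -> infinite (fun n => N n /\ (m < n)%nat).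
Proof. intros H n. destruct (H (Nat.max n (S m))) as [k [Hk1 Hk2]]. exists k. split; [lia|split; auto; lia]. Qed.

Lemma HNC_sub (X : Banach) y r s C M M' : HNC X y r s C M -> (forall n, M' n -> M n) -> HNC X y r s C M'.
Proof. intros H Hs N HN HNM. apply H; auto. Qed.

Record st4 (X : Banach) := mk4 { s_m : nat; s_N : nat -> Prop; s_C : (X -> R) -> Prop; s_P : R -> Prop }.
Arguments mk4 {X}. Arguments s_m {X}. Arguments s_N {X}. Arguments s_C {X}. Arguments s_P {X}.

Lemma SL (X : Banach) (y : nat -> X) (r s : R) (Cs : list ((X -> R) -> Prop)) (M : nat -> Prop) :
  infinite M -> (forall C, In C Cs -> HNC X y r s C M) ->
  exists m, M m /\ exists M', infinite M' /\ (forall n, M' n -> M n /\ (m < n)%nat) /\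
    forall C, In C Cs -> HNC X y r s (Cside X y (fun v => v <= r) m C) M' /\
                         HNC X y r s (Cside X y (fun v => s <= v) m C) M'.
Proof.
  intros HMinf HCs. apply NNPP; intro Hneg.
  set (Pr := fun v : R => v <= r). set (Ps := fun v : R => s <= v).
  set (l := map (fun C => (C, Pr)) Cs ++ map (fun C => (C, Ps)) Cs).
  assert (Hl : forall C P, In (C, P) l -> In C Cs /\ (P = Pr \/ P = Ps)).
  { intros C P H. unfold l in H. apply in_app_iff in H. destruct H as [H|H];
    apply in_map_iff in H; destruct H as [C' [E HC']]; injection E; intros; subst; auto. }
  assert (Hbad : forall m, M m -> forall M', infinite M' -> (forall n, M' n -> M n /\ (m < n)%nat) ->
     exists C P, In (C, P) l /\ exists N, infinite N /\ (forall n, N n -> M' n) /\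
        forall f, C f -> P (f (y m)) -> ~ osc X y r s f N).
  { intros m Hm M' HM' HM'M. apply NNPP. intro Hn. apply Hneg. exists m. split; auto.
    exists M'. split; auto. split; auto. intros C HC. split; intros N HN HNM; apply NNPP; intro Hno; apply Hn.
    - exists C, Pr. split. { unfold l. apply in_app_iff. left. apply in_map_iff. eauto. }
      exists N. split; auto. split; auto. intros f Hf HP Hosc. apply Hno. exists f. split; auto. split; auto.
    - exists C, Ps. split. { unfold l. apply in_app_iff. right. apply in_map_iff. eauto. }
      exists N. split; auto. split; auto. intros f Hf HP Hosc. apply Hno. exists f. split; auto. split; auto. }
  set (valid := fun a : st4 X => infinite (s_N a) /\ forall n, s_N a n -> M n).
  set (rel := fun a b : st4 X => s_N a (s_m b) /\ (s_m a < s_m b)%nat /\ infinite (s_N b) /\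
     (forall n, s_N b n -> s_N a n /\ (s_m b < n)%nat) /\ In (s_C b, s_P b) l /\
     forall f, s_C b f -> s_P b (f (y (s_m b))) -> ~ osc X y r s f (s_N b)).
  destruct (iterate valid rel (mk4 0%nat M (fun _ => True) Pr)) as [sq [Hsq0 Hsq]].
  { split; auto. }
  { intros a [Ha1 Ha2]. destruct (Ha1 (S (s_m a))) as [m' [Hm'1 Hm'2]].
    destruct (Hbad m' (Ha2 _ Hm'2) (fun n => s_N a n /\ (m' < n)%nat) (infinite_gt _ _ Ha1)) as [C [P [HCP [N' [HN'1 [HN'2 HN'3]]]]]].
    { intros n [H1 H2]. auto. }
    exists (mk4 m' N' C P). unfold rel; simpl.
    split; [exact Hm'2|]. split; [lia|]. split; [exact HN'1|]. split; [|split; [exact HCP|exact HN'3]].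
    intros n Hn. destruct (HN'2 n Hn). auto. }
  { intros a b [Ha1 Ha2] [_ [_ [Hb1 [Hb2 _]]]]. split; [exact Hb1|]. intros n Hn. apply Ha2. exact (proj1 (Hb2 n Hn)). }
  set (mm := fun i => s_m (sq i)). set (NN := fun i => s_N (sq i)).
  assert (Hmm : forall i, (mm i < mm (S i))%nat).
  { intro i. destruct (Hsq i) as [_ [_ [H _]]]. exact H. }
  assert (Hsub1 : forall i n, NN (S i) n -> NN i n).
  { intros i n Hn. destruct (Hsq i) as [_ [_ [_ [_ [H _]]]]]. apply (H n Hn). }
  assert (Hsub : forall i j, (i <= j)%nat -> forall n, NN j n -> NN i n).
  { intros i j Hij. induction Hij; auto. }
  assert (HNM : forall i n, NN i n -> M n).
  { intros i n Hn. destruct (Hsq i) as [[_ H] _]. exact (H n Hn). }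
  assert (HmN : forall i, NN i (mm (S i))).
  { intros i. destruct (Hsq i) as [_ [H _]]. exact H. }
  destruct (pigeon_gen l (fun i => (s_C (sq (S i)), s_P (sq (S i))))) as [[Cst Pst] [Hin Hinf]].
  { exists 0%nat. intros i _. destruct (Hsq i) as [_ [_ [_ [_ [_ [H _]]]]]]. exact H. }
  destruct (Hl _ _ Hin) as [HCst HPst].
  set (D := fun n => exists i, (s_C (sq (S i)), s_P (sq (S i))) = (Cst, Pst) /\ n = mm (S i)).
  assert (HDinf : infinite D).
  { intro n. destruct (Hinf n) as [i [Hi Ei]]. exists (mm (S i)). split.
    - pose proof (strict_ge mm Hmm (S i)). lia.
    - exists i. auto. }
  destruct (HCs Cst HCst D HDinf) as [f [Hf Hosc]].
  { intros n [i [_ ->]]. apply (HNM i). apply HmN. }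
  assert (HPosc : forall n, exists m, (n <= m)%nat /\ D m /\ Pst (f (y m))).
  { destruct HPst as [->| ->]; [apply (proj1 Hosc) | apply (proj2 Hosc)]. }
  destruct (HPosc 0%nat) as [m0 [_ [[i0 [Ei0 ->]] HP0]]].
  injection Ei0; intros EP EC.
  destruct (Hsq i0) as [_ [_ [_ [_ [_ [_ Hno]]]]]].
  apply (Hno f); [rewrite EC; auto | rewrite EP; auto |].
  assert (HD : forall m'', D m'' -> (mm (S i0) < m'')%nat -> NN (S i0) m'').
  { intros m'' [i'' [_ ->]] Hlt. apply (Hsub (S i0) i'').
    - destruct (Compare_dec.le_lt_dec i'' i0) as [Hle|Hlt2]; [|lia].
      exfalso. destruct (Compare_dec.le_lt_eq_dec _ _ Hle) as [Hl2| ->]; [|lia].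
      pose proof (strict_mono mm Hmm (S i'') (S i0) ltac:(lia)). lia.
    - apply HmN. }
  split; intro n.
  - destruct (proj1 Hosc (Nat.max n (S (mm (S i0))))) as [m [Hm1 [Hm2 Hm3]]].
    exists m. split; [lia|]. split; auto. apply HD; auto. lia.
  - destruct (proj2 Hosc (Nat.max n (S (mm (S i0))))) as [m [Hm1 [Hm2 Hm3]]].
    exists m. split; [lia|]. split; auto. apply HD; auto. lia.
Qed.


Definition Sd (X : Banach) (f : X -> R) := is_dual X f /\ forall x, Rabs (f x) <= vnorm x.

Fixpoint Dpat (X : Banach) (y : nat -> X) (r s : R) (ms : nat -> nat) (sg : nat -> bool) (n : nat)
  : (X -> R) -> Prop :=
  match n with
  | O => Sd X
  | S n' => Cside X y (if sg n' then (fun v => s <= v) else (fun v => v <= r)) (ms n) (Dpat X y r s ms sg n')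
  end.

Record st3 (X : Banach) := mk3 { t_L : list ((X -> R) -> Prop); t_m : nat; t_M : nat -> Prop }.
Arguments mk3 {X}. Arguments t_L {X}. Arguments t_m {X}. Arguments t_M {X}.

Lemma Dpat_prop (X : Banach) y r s ms sg n f : Dpat X y r s ms sg n f ->
  Sd X f /\ forall k, (k < n)%nat -> (sg k = true -> s <= f (y (ms (S k)))) /\ (sg k = false -> f (y (ms (S k))) <= r).
Proof.
  revert f. induction n as [|n IH]; intros f Hf.
  - split; auto. intros; lia.
  - simpl in Hf. destruct Hf as [Hf HP]. destruct (IH f Hf) as [HS Hk]. split; auto.
    intros k Hkn. destruct (Nat.eq_dec k n) as [->|Hne].
    + destruct (sg n); split; intro E; try discriminate; auto.
    + apply Hk. lia.
Qed.

Lemma BI (X : Banach) (y : nat -> X) (r s : R) (M0 : nat -> Prop) :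
  infinite M0 -> HNC X y r s (Sd X) M0 ->
  exists ms : nat -> nat, forall (sg : nat -> bool) n, exists f, Dpat X y r s ms sg n f.
Proof.
  intros HM0 HS.
  set (Pr := fun v : R => v <= r). set (Ps := fun v : R => s <= v).
  set (valid := fun a : st3 X => infinite (t_M a) /\ forall C, In C (t_L a) -> HNC X y r s C (t_M a)).
  set (rel := fun a b : st3 X => infinite (t_M b) /\
     t_L b = map (Cside X y Ps (t_m b)) (t_L a) ++ map (Cside X y Pr (t_m b)) (t_L a) /\
     forall C, In C (t_L b) -> HNC X y r s C (t_M b)).
  destruct (iterate valid rel (mk3 (Sd X :: nil) 0%nat M0)) as [sq [Hsq0 Hsq]].
  { split; auto. intros C [<-|[]]. auto. }
  { intros a [Ha1 Ha2]. destruct (SL X y r s (t_L a) (t_M a) Ha1 Ha2) as [m [_ [M' [HM'1 [_ HM'3]]]]].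
    exists (mk3 (map (Cside X y Ps m) (t_L a) ++ map (Cside X y Pr m) (t_L a)) m M').
    unfold rel; simpl. split; auto. split; auto.
    intros C HC. apply in_app_iff in HC. destruct HC as [HC|HC]; apply in_map_iff in HC;
      destruct HC as [C' [<- HC']]; apply HM'3; auto. }
  { intros a b _ [Hb1 [_ Hb3]]. split; auto. }
  exists (fun n => t_m (sq n)). intros sg n.
  assert (Hin : In (Dpat X y r s (fun n => t_m (sq n)) sg n) (t_L (sq n))).
  { induction n as [|n IH].
    - rewrite Hsq0. simpl. auto.
    - destruct (Hsq n) as [_ [_ [E _]]]. rewrite E. simpl. apply in_app_iff.
      destruct (sg n); [left|right]; apply in_map_iff; exists (Dpat X y r s (fun n => t_m (sq n)) sg n); (split; [reflexivity|auto]). }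
  destruct (Hsq n) as [[Hv1 Hv2] _].
  destruct (Hv2 _ Hin (t_M (sq n)) Hv1 (fun _ h => h)) as [f [Hf _]]. eauto.
Qed.


Fixpoint vsum (X : Banach) (v : nat -> X) (n : nat) : X :=
  match n with O => vzero | S n' => vadd (vsum X v n') (v n') end.
Fixpoint rsum (a : nat -> R) (n : nat) : R :=
  match n with O => 0 | S n' => rsum a n' + a n' end.

Lemma rsum_sum_f (a : nat -> R) n : rsum a (S n) = sum_f_R0 a n.
Proof. induction n; simpl in *; auto. lra. rewrite <- IHn. reflexivity. Qed.

Lemma rsum_ext (a b : nat -> R) n : (forall k, a k = b k) -> rsum a n = rsum b n.
Proof. intros H. induction n; simpl; auto. rewrite IHn, H. reflexivity. Qed.

Lemma rsum_le (a b : nat -> R) n : (forall k, (k < n)%nat -> a k <= b k) -> rsum a n <= rsum b n.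
Proof. induction n; simpl; intros H; [lra|]. pose proof (H n ltac:(lia)). pose proof (IHn (fun k Hk => H k ltac:(lia))). lra. Qed.

Lemma rsum_mono (a : nat -> R) n m : (forall k, 0 <= a k) -> (n <= m)%nat -> rsum a n <= rsum a m.
Proof. intros Ha Hnm. induction Hnm; [lra|]. simpl. pose proof (Ha m). lra. Qed.

Lemma dual_vsum (X : Banach) f v n : is_dual X f -> f (vsum X v n) = rsum (fun k => f (v k)) n.
Proof.
  intros Hf. induction n; simpl. apply dual_zero; auto.
  destruct Hf as [Ha _]. rewrite Ha, IHn. reflexivity.
Qed.

Lemma vscal_zero (X : Banach) c : vscal c (@vzero X) = vzero.
Proof. rewrite <- (vscal_0 X vzero) at 1. rewrite vscal_assoc. replace (c * 0) with 0 by ring. apply vscal_0. Qed.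

Lemma vadd_rearr (X : Banach) (p q n : X) : vadd (vadd p q) (vopp n) = vadd (vadd p (vopp n)) q.
Proof. rewrite <- !vadd_assoc. f_equal. apply vadd_comm. Qed.

Lemma dist_self (X : Banach) (x : X) : dist X x x = 0.
Proof. unfold dist. rewrite vadd_opp. apply vnorm_zero. Qed.

Definition conv (X : Banach) (v : nat -> X) (x : X) := forall eps, 0 < eps ->
  exists N, forall n, (N <= n)%nat -> vnorm (vadd (v n) (vopp x)) < eps.

Lemma conv_unique (X : Banach) v x x' : conv X v x -> conv X v x' -> x = x'.
Proof.
  intros H1 H2.
  assert (Hd : dist X x x' = 0).
  { apply Rle_antisym; [|apply vnorm_nonneg]. apply le_epsilon. intros eps Heps.
    destruct (H1 (eps/2)) as [N1 HN1]; [lra|]. destruct (H2 (eps/2)) as [N2 HN2]; [lra|].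
    specialize (HN1 (Nat.max N1 N2) ltac:(lia)). specialize (HN2 (Nat.max N1 N2) ltac:(lia)).
    pose proof (dist_tri X x (v (Nat.max N1 N2)) x'). rewrite (dist_sym X x (v (Nat.max N1 N2))) in H.
    unfold dist in *. lra. }
  unfold dist in Hd. apply vnorm_eq0 in Hd.
  assert (vadd (vadd x (vopp x')) x' = vadd vzero x') by now rewrite Hd.
  rewrite <- vadd_assoc, (vadd_comm _ (vopp x')), vadd_opp, vadd_0, vadd_0l in H. exact H.
Qed.

Lemma conv_ext (X : Banach) v w x : (forall n, v n = w n) -> conv X v x -> conv X w x.
Proof. intros E H eps Heps. destruct (H eps Heps) as [N HN]. exists N. intros n Hn. rewrite <- E. auto. Qed.

Lemma conv_add (X : Banach) v w x z : conv X v x -> conv X w z ->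
  conv X (fun n => vadd (v n) (w n)) (vadd x z).
Proof.
  intros H1 H2 eps Heps. destruct (H1 (eps/2)) as [N1 HN1]; [lra|]. destruct (H2 (eps/2)) as [N2 HN2]; [lra|].
  exists (Nat.max N1 N2). intros n Hn. rewrite vopp_add, vadd_swap.
  eapply Rle_lt_trans; [apply vnorm_triangle|].
  specialize (HN1 n ltac:(lia)). specialize (HN2 n ltac:(lia)). lra.
Qed.

Lemma conv_scal (X : Banach) v x c : conv X v x -> conv X (fun n => vscal c (v n)) (vscal c x).
Proof.
  intros H eps Heps. destruct (H (eps / (Rabs c + 1))) as [N HN].
  { apply Rdiv_lt_0_compat; auto. pose proof (Rabs_pos c). lra. }
  exists N. intros n Hn. rewrite <- vscal_opp, <- vscal_distr_l, vnorm_scal.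
  specialize (HN n Hn). pose proof (Rabs_pos c). pose proof (vnorm_nonneg X (vadd (v n) (vopp x))).
  apply Rle_lt_trans with ((Rabs c + 1) * vnorm (vadd (v n) (vopp x))); [nra|].
  apply Rmult_lt_compat_l with (r := Rabs c + 1) in HN; [|lra].
  replace ((Rabs c + 1) * (eps / (Rabs c + 1))) with eps in HN by (field; lra). exact HN.
Qed.

Definition psum (X : Banach) (u : nat -> X) (a : nat -> R) (n : nat) : X :=
  vsum X (fun k => vscal (a k) (u k)) n.

Lemma psum_add (X : Banach) u a b n :
  psum X u (fun k => a k + b k) n = vadd (psum X u a n) (psum X u b n).
Proof.
  unfold psum. induction n; simpl. rewrite vadd_0; auto.
  rewrite IHn, vscal_distr_r. apply vadd_swap.
Qed.

Lemma psum_scal (X : Banach) u a c n :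
  psum X u (fun k => c * a k) n = vscal c (psum X u a n).
Proof.
  unfold psum. induction n; simpl. rewrite vscal_zero; auto.
  rewrite IHn, vscal_distr_l, vscal_assoc. reflexivity.
Qed.

Lemma psum_upper (X : Banach) u a n : (forall k, vnorm (u k) <= 1) ->
  vnorm (psum X u a n) <= rsum (fun k => Rabs (a k)) n.
Proof.
  intros Hu. unfold psum. induction n; simpl. rewrite vnorm_zero; lra.
  eapply Rle_trans; [apply vnorm_triangle|]. rewrite vnorm_scal.
  pose proof (Hu n). pose proof (Rabs_pos (a n)). nra.
Qed.

Lemma psum_cauchy (X : Banach) u a n m : (forall k, vnorm (u k) <= 1) -> (n <= m)%nat ->
  dist X (psum X u a m) (psum X u a n) <= rsum (fun k => Rabs (a k)) m - rsum (fun k => Rabs (a k)) n.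
Proof.
  intros Hu Hnm. induction Hnm. rewrite dist_self; lra.
  unfold dist, psum in *. simpl. rewrite vadd_rearr.
  eapply Rle_trans; [apply vnorm_triangle|]. rewrite vnorm_scal.
  pose proof (Hu m). pose proof (Rabs_pos (a m)). nra.
Qed.

Lemma psum_lower (X : Banach) (u : nat -> X) (r s : R) :
  (forall (sg : nat -> bool) n, exists f, Sd X f /\ forall k, (k < n)%nat ->
      (sg k = true -> s <= f (u k)) /\ (sg k = false -> f (u k) <= r)) ->
  forall a n, (s - r) / 2 * rsum (fun k => Rabs (a k)) n <= vnorm (psum X u a n).
Proof.
  intros Hpat a n.
  set (sg := fun k => if Rle_dec 0 (a k) then true else false).
  destruct (Hpat sg n) as [f1 [[Hf1 Nf1] P1]]. destruct (Hpat (fun k => negb (sg k)) n) as [f2 [[Hf2 Nf2] P2]].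
  assert (E : forall f, is_dual X f -> f (psum X u a n) = rsum (fun k => a k * f (u k)) n).
  { intros f Hf. unfold psum. rewrite dual_vsum by auto. apply rsum_ext. intro k. apply dual_scal; auto. }
  assert (Hd : f1 (psum X u a n) - f2 (psum X u a n) = rsum (fun k => a k * (f1 (u k) - f2 (u k))) n).
  { rewrite !E by auto. clear - f1 f2 a u. induction n; simpl; [ring|]. rewrite <- IHn. ring. }
  assert (Hle : rsum (fun k => (s - r) * Rabs (a k)) n <= rsum (fun k => a k * (f1 (u k) - f2 (u k))) n).
  { apply rsum_le. intros k Hk. destruct (P1 k Hk) as [P1t P1f]. destruct (P2 k Hk) as [P2t P2f].
    unfold sg in *. destruct (Rle_dec 0 (a k)) as [Ha|Ha]; simpl in *.
    - specialize (P1t eq_refl). specialize (P2f eq_refl). rewrite Rabs_right by lra. nra.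
    - specialize (P1f eq_refl). specialize (P2t eq_refl). rewrite Rabs_left by lra. nra. }
  assert (Hrs : rsum (fun k => (s - r) * Rabs (a k)) n = (s - r) * rsum (fun k => Rabs (a k)) n).
  { clear. induction n; simpl; [ring|]. rewrite IHn. ring. }
  pose proof (Nf1 (psum X u a n)). pose proof (Nf2 (psum X u a n)).
  pose proof (Rle_abs (f1 (psum X u a n))). pose proof (Rle_abs (- f2 (psum X u a n))).
  rewrite Rabs_Ropp in H2. lra.
Qed.

Lemma l1_conv (X : Banach) u a l : (forall k, vnorm (u k) <= 1) ->
  infinite_sum (fun n => Rabs (a n)) l -> exists x, conv X (psum X u a) x.
Proof.
  intros Hu Hl. apply vcomplete. intros eps Heps.
  destruct (Hl (eps / 2)) as [N HN]; [lra|].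
  exists (S N). intros m n Hm Hn.
  assert (Hr : forall p, (S N <= p)%nat -> Rabs (rsum (fun k => Rabs (a k)) p - l) < eps / 2).
  { intros p Hp. destruct p; [lia|]. rewrite rsum_sum_f. apply HN. lia. }
  pose proof (Hr m Hm). pose proof (Hr n Hn).
  destruct (Compare_dec.le_ge_dec n m) as [Hnm|Hnm].
  - pose proof (psum_cauchy X u a n m Hu Hnm). unfold dist in H1.
    apply Rabs_def2 in H. apply Rabs_def2 in H0. lra.
  - pose proof (psum_cauchy X u a m n Hu Hnm). rewrite dist_sym in H1. unfold dist in H1.
    apply Rabs_def2 in H. apply Rabs_def2 in H0. lra.
Qed.

Lemma l1_from_patterns (X : Banach) (u : nat -> X) (r s : R) : r < s -> (forall k, vnorm (u k) <= 1) ->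
  (forall (sg : nat -> bool) n, exists f, Sd X f /\ forall k, (k < n)%nat ->
      (sg k = true -> s <= f (u k)) /\ (sg k = false -> f (u k) <= r)) ->
  contains_l1 X.
Proof.
  intros Hrs Hu Hpat.
  assert (HT : forall a, exists x, (exists x', conv X (psum X u a) x') -> conv X (psum X u a) x).
  { intro a. destruct (classic (exists x', conv X (psum X u a) x')) as [[x' H]|H].
    - exists x'; auto.
    - exists vzero; intro; contradiction. }
  destruct (choice_fun _ HT) as [T HTs].
  assert (HTc : forall a, is_l1 a -> conv X (psum X u a) (T a)).
  { intros a [l Hl]. apply HTs. apply (l1_conv X u a l Hu Hl). }
  exists T, ((s - r) / 2), 1. split; [lra|]. split; [lra|]. split; [|split].
  - intros a b Ha Hb. apply (conv_unique X (psum X u (fun n => a n + b n))).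
    + apply HTs. exists (vadd (T a) (T b)). apply (conv_ext X (fun n => vadd (psum X u a n) (psum X u b n))).
      { intro n. symmetry. apply psum_add. }
      apply conv_add; auto.
    + apply (conv_ext X (fun n => vadd (psum X u a n) (psum X u b n))).
      { intro n. symmetry. apply psum_add. }
      apply conv_add; auto.
  - intros c a Ha. apply (conv_unique X (psum X u (fun n => c * a n))).
    + apply HTs. exists (vscal c (T a)). apply (conv_ext X (fun n => vscal c (psum X u a n))).
      { intro n. symmetry. apply psum_scal. }
      apply conv_scal; auto.
    + apply (conv_ext X (fun n => vscal c (psum X u a n))).
      { intro n. symmetry. apply psum_scal. }
      apply conv_scal; auto.
  - intros a l Hl. assert (Hc := HTc a (ex_intro _ l Hl)).
    assert (Hpos : forall k, 0 <= Rabs (a k)) by (intro; apply Rabs_pos).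
    assert (Hbel : forall n, rsum (fun k => Rabs (a k)) n <= l).
    { intro n. apply Rnot_lt_le. intro Hlt.
      destruct (Hl (rsum (fun k => Rabs (a k)) n - l)) as [N HN]; [lra|].
      specialize (HN (Nat.max N n) ltac:(lia)). rewrite <- rsum_sum_f in HN.
      pose proof (rsum_mono _ n (S (Nat.max N n)) Hpos ltac:(lia)).
      unfold R_dist in HN. apply Rabs_def2 in HN. lra. }
    split.
    + apply le_epsilon. intros eps Heps.
      set (e := eps / ((s - r) / 2 + 1)).
      assert (He : 0 < e) by (apply Rdiv_lt_0_compat; lra).
      destruct (Hc e He) as [N1 HN1]. destruct (Hl e He) as [N2 HN2].
      set (n := S (Nat.max N1 N2)).
      specialize (HN1 n ltac:(unfold n; lia)). specialize (HN2 (Nat.max N1 N2) ltac:(lia)).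
      rewrite <- rsum_sum_f in HN2. fold n in HN2. unfold R_dist in HN2. apply Rabs_def2 in HN2.
      pose proof (psum_lower X u r s Hpat a n).
      pose proof (vnorm_dist X (psum X u a n) (T a)). unfold dist in H0.
      assert (eps = e * ((s - r) / 2 + 1)) by (unfold e; field; lra).
      nra.
    + apply le_epsilon. intros eps Heps.
      destruct (Hc eps Heps) as [N1 HN1]. specialize (HN1 N1 (le_n _)).
      pose proof (vnorm_dist X (T a) (psum X u a N1)). rewrite dist_sym in H. unfold dist in H.
      pose proof (psum_upper X u a N1 Hu). pose proof (Hbel N1). lra.
Qed.


Lemma no_HNC (X : Banach) (HX : ~ contains_l1 X) (y : nat -> X) (Hy : forall j, vnorm (y j) <= 1)
  r s M : r < s -> infinite M -> ~ HNC X y r s (Sd X) M.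
Proof.
  intros Hrs HM HH. apply HX. destruct (BI X y r s M HM HH) as [ms Hms].
  apply (l1_from_patterns X (fun k => y (ms (S k))) r s Hrs); auto.
  intros sg n. destruct (Hms sg n) as [f Hf]. apply Dpat_prop in Hf. destruct Hf as [HS Hk].
  exists f. split; auto.
Qed.

Lemma osc_mono (X : Banach) y r s f N N' : osc X y r s f N' -> (forall n, N' n -> N n) -> osc X y r s f N.
Proof.
  intros [H1 H2] Hs. split; intro n.
  - destruct (H1 n) as [m [? [? ?]]]. exists m. auto.
  - destruct (H2 n) as [m [? [? ?]]]. exists m. auto.
Qed.

Lemma thin (X : Banach) (HX : ~ contains_l1 X) (y : nat -> X) (Hy : forall j, vnorm (y j) <= 1)
  r s H : r < s -> infinite H -> exists N, infinite N /\ (forall n, N n -> H n) /\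
    forall f, Sd X f -> ~ osc X y r s f N.
Proof.
  intros Hrs HH. pose proof (no_HNC X HX y Hy r s H Hrs HH) as Hn.
  unfold HNC in Hn. apply not_all_ex_not in Hn. destruct Hn as [N Hn].
  exists N. apply imply_to_and in Hn. destruct Hn as [HN Hn]. split; auto.
  apply imply_to_and in Hn. destruct Hn as [HNH Hn]. split; auto.
  intros f Hf Ho. apply Hn. eauto.
Qed.

Lemma thin_list (X : Banach) (HX : ~ contains_l1 X) (y : nat -> X) (Hy : forall j, vnorm (y j) <= 1)
  (ps : list (R * R)) : (forall p, In p ps -> fst p < snd p) -> forall H, infinite H ->
  exists N, infinite N /\ (forall n, N n -> H n) /\
    forall p, In p ps -> forall f, Sd X f -> ~ osc X y (fst p) (snd p) f N.
Proof.
  induction ps as [|p ps IH]; intros Hps H HH.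
  - exists H. split; [auto|]. split; [auto|]. intros p [].
  - destruct (IH (fun q Hq => Hps q (or_intror Hq)) H HH) as [N1 [HN1 [HN1H HN1o]]].
    destruct (thin X HX y Hy (fst p) (snd p) N1 (Hps p (or_introl eq_refl)) HN1) as [N2 [HN2 [HN2H HN2o]]].
    exists N2. split; auto. split; [intros n Hn; auto|].
    intros q [<-|Hq] f Hf Ho; [apply (HN2o f Hf Ho)|].
    apply (HN1o q Hq f Hf). apply (osc_mono X y _ _ f N1 N2); auto.
Qed.

Definition grid (n t : nat) : R := INR t / INR (S n) - 2.
Definition pairs (n : nat) : list (R * R) := map (fun t => (grid n t, grid n (S t))) (seq 0 (3 * S n + 2)).

Lemma grid_lt n t : grid n t < grid n (S t).
Proof.
  unfold grid. pose proof (lt_0_INR (S n) ltac:(lia)).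
  apply Rplus_lt_compat_r. unfold Rdiv. apply Rmult_lt_compat_r; [apply Rinv_0_lt_compat; lra|].
  apply lt_INR. lia.
Qed.

Lemma pairs_lt n p : In p (pairs n) -> fst p < snd p.
Proof. unfold pairs. intros Hp. apply in_map_iff in Hp. destruct Hp as [t [<- _]]. apply grid_lt. Qed.

Lemma pairs_in n t : (t < 3 * S n + 2)%nat -> In (grid n t, grid n (S t)) (pairs n).
Proof. intro Ht. unfold pairs. apply in_map_iff. exists t. split; auto. apply in_seq. lia. Qed.

Lemma grid_0 n : grid n 0 = -2.
Proof. unfold grid. simpl. unfold Rdiv. rewrite Rmult_0_l. ring. Qed.

Lemma grid_top n : grid n (3 * S n) = 1.
Proof.
  unfold grid. rewrite mult_INR. pose proof (lt_0_INR (S n) ltac:(lia)). simpl (INR 3). field_simplify; lra.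
Qed.

Lemma grid_width n t : grid n (S (S t)) - grid n t = 2 / INR (S n).
Proof.
  unfold grid. rewrite !S_INR. pose proof (pos_INR n). field. lra.
Qed.

Lemma level_cauchy (X : Banach) (y : nat -> X) (Hy : forall j, vnorm (y j) <= 1) n H f :
  infinite H -> Sd X f -> (forall p, In p (pairs n) -> ~ osc X y (fst p) (snd p) f H) ->
  exists N0 t, forall m, (N0 <= m)%nat -> H m -> grid n t < f (y m) < grid n (S (S t)).
Proof.
  intros HH [_ Hf] Hno.
  assert (Hb : forall m, -1 <= f (y m) <= 1).
  { intro m. pose proof (Hf (y m)). pose proof (Hy m). revert H0; unfold Rabs; destruct Rcase_abs; intros; lra. }
  set (EvGt := fun c => exists N0, forall m, (N0 <= m)%nat -> H m -> c < f (y m)).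
  set (EvLt := fun c => exists N0, forall m, (N0 <= m)%nat -> H m -> f (y m) < c).
  assert (dich : forall t, (t < 3 * S n + 2)%nat -> EvGt (grid n t) \/ EvLt (grid n (S t))).
  { intros t Ht. specialize (Hno _ (pairs_in n t Ht)). simpl in Hno. unfold osc in Hno.
    apply not_and_or in Hno. destruct Hno as [Hn|Hn]; [left|right];
    apply not_all_ex_not in Hn; destruct Hn as [N0 Hn]; exists N0; intros m Hm HHm;
    apply Rnot_le_lt; intro Hc; apply Hn; exists m; auto. }
  assert (Hind : forall u t, (t + u = 3 * S n)%nat -> EvGt (grid n t) ->
     exists N0 t', forall m, (N0 <= m)%nat -> H m -> grid n t' < f (y m) < grid n (S (S t'))).
  { induction u as [|u IH]; intros t Ht [N0 HN0].
    - rewrite Nat.add_0_r in Ht. subst t. rewrite grid_top in HN0.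
      destruct (HH N0) as [m [Hm HHm]]. specialize (HN0 m Hm HHm). specialize (Hb m). lra.
    - destruct (dich (S t) ltac:(lia)) as [Hg|[N1 HN1]].
      + apply (IH (S t)); auto. lia.
      + exists (Nat.max N0 N1), t. intros m Hm HHm. split.
        * apply HN0; auto; lia.
        * apply HN1; auto; lia. }
  apply (Hind (3 * S n)%nat 0%nat); [lia|]. exists 0%nat. intros m _ _. rewrite grid_0. specialize (Hb m). lra.
Qed.

Fixpoint gseq (nx : nat * nat -> nat) (j : nat) : nat :=
  match j with O => nx (0%nat, 0%nat) | S j' => nx (S j', S (gseq nx j')) end.

Lemma rosenthal (X : Banach) (HX : ~ contains_l1 X) : RosenthalProp X.
Proof.
  intros y Hy.
  set (valid := fun a : nat * (nat -> Prop) => infinite (snd a)).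
  set (rel := fun a b : nat * (nat -> Prop) => fst b = S (fst a) /\ infinite (snd b) /\
     (forall n, snd b n -> snd a n) /\
     forall p, In p (pairs (fst a)) -> forall f, Sd X f -> ~ osc X y (fst p) (snd p) f (snd b)).
  destruct (iterate valid rel (0%nat, fun _ => True)) as [sq [Hsq0 Hsq]].
  { intro n. exists n. split; [lia|exact I]. }
  { intros [i H] HH. destruct (thin_list X HX y Hy (pairs i) (pairs_lt i) H HH) as [N [HN1 [HN2 HN3]]].
    exists (S i, N). unfold rel; simpl. auto. }
  { intros a b _ [_ [Hb _]]. exact Hb. }
  set (HH := fun i => snd (sq i)).
  assert (Hfst : forall i, fst (sq i) = i).
  { induction i. rewrite Hsq0; auto. destruct (Hsq i) as [_ [E _]]. rewrite E, IHi. auto. }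
  assert (Hinf : forall i, infinite (HH i)) by (intro i; apply (Hsq i)).
  assert (Hsub : forall i j, (i <= j)%nat -> forall n, HH j n -> HH i n).
  { intros i j Hij. induction Hij; auto. intros n Hn. apply IHHij. destruct (Hsq m) as [_ [_ [_ [H _]]]]. apply H, Hn. }
  assert (Hno : forall i p, In p (pairs i) -> forall f, Sd X f -> ~ osc X y (fst p) (snd p) f (HH (S i))).
  { intros i p Hp f Hf. destruct (Hsq i) as [_ [_ [_ [_ H]]]]. apply H; auto. rewrite Hfst; auto. }
  destruct (choice_fun (fun (jb : nat * nat) m => (snd jb <= m)%nat /\ HH (fst jb) m)) as [nx Hnx].
  { intros [j b]. destruct (Hinf j b) as [m Hm]. exists m. exact Hm. }
  set (g := gseq nx).
  assert (HgH : forall j, HH j (g j)).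
  { intros [|j]; simpl; apply (Hnx (_, _)). }
  assert (Hg : forall j, (g j < g (S j))%nat).
  { intro j. unfold g; simpl. destruct (Hnx (S j, S (gseq nx j))) as [H _]. simpl in H. lia. }
  exists g. split; auto.
  intros f Hf eps Heps. pose proof Hf as [Hadd [Hsc [Mf HMf]]].
  set (c := Rabs Mf + 1).
  assert (Hc : 0 < c) by (unfold c; pose proof (Rabs_pos Mf); lra).
  set (f' := fun x => f x / c).
  assert (Hf' : Sd X f').
  { split; [split; [|split]|].
    - intros x z. unfold f'. rewrite Hadd. field. lra.
    - intros a x. unfold f'. rewrite Hsc. field. lra.
    - exists 1. intros x. rewrite Rmult_1_l. unfold f'. unfold Rdiv. rewrite Rabs_mult, Rabs_inv, (Rabs_right c) by lra.
      pose proof (HMf x). pose proof (vnorm_nonneg X x).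
      apply (Rmult_le_reg_r c); [lra|]. rewrite Rmult_assoc, Rinv_l by lra.
      unfold c. pose proof (Rle_abs Mf). nra.
    - intros x. unfold f'. unfold Rdiv. rewrite Rabs_mult, Rabs_inv, (Rabs_right c) by lra.
      pose proof (HMf x). pose proof (vnorm_nonneg X x).
      apply (Rmult_le_reg_r c); [lra|]. rewrite Rmult_assoc, Rinv_l by lra.
      unfold c. pose proof (Rle_abs Mf). nra. }
  destruct (INR_archimed (eps / c) 2) as [n Hn]; [apply Rdiv_lt_0_compat; lra|].
  destruct (level_cauchy X y Hy n (HH (S n)) f' (Hinf (S n)) Hf' (fun p Hp => Hno n p Hp f' Hf')) as [N0 [t Ht]].
  exists (Nat.max N0 (S n)). intros p q Hp Hq.
  assert (Hgp := strict_ge g Hg p). assert (Hgq := strict_ge g Hg q).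
  destruct (Ht (g p) ltac:(lia) (Hsub (S n) p ltac:(lia) _ (HgH p))) as [Hp1 Hp2].
  destruct (Ht (g q) ltac:(lia) (Hsub (S n) q ltac:(lia) _ (HgH q))) as [Hq1 Hq2].
  pose proof (grid_width n t).
  assert (Hw : 2 / INR (S n) < eps / c).
  { rewrite S_INR. pose proof (pos_INR n). apply (Rmult_lt_reg_r (INR n + 1)); [lra|].
    unfold Rdiv at 1. rewrite Rmult_assoc, Rinv_l by lra. nra. }
  unfold f' in *.
  assert (Habs : Rabs (f (y (g p)) / c - f (y (g q)) / c) < eps / c).
  { apply Rabs_def1; lra. }
  replace (f (y (g p)) / c - f (y (g q)) / c) with ((f (y (g p)) - f (y (g q))) / c) in Habs by (field; lra).
  unfold Rdiv in Habs. rewrite Rabs_mult, Rabs_inv, (Rabs_right c) in Habs by lra.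
  apply (Rmult_lt_compat_r c) in Habs; [|lra]. rewrite !Rmult_assoc, !Rinv_l in Habs by lra. lra.
Qed.


Theorem lemma2p5 (X : Banach) (HX : ~ contains_l1 X)
  (xs : nat -> X -> R) (Hdual : forall k, is_dual X (xs k))
  (Hbdd : exists M, forall k, dnorm X (xs k) <= M) :
  ca X xs <= 3 * ca_rho X xs.
Proof.
  exact (main_reduction X (rosenthal X HX) xs Hdual Hbdd).
Qed.
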